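(* There exist an instance domain $\mathcal{X}$ and a hypothesis class $\mathcal{H}$ consisting of a single hypothesis such that the following holds for all integers $k,l\ge0$: if $k<l$, then for any $a\ge 0$ there exists a strategy of the adversary, all of whose presented sequences satisfy the $l$-bias assumption with respect to $\mathcal{H}$, such that any algorithm guaranteeing a cumulative mistake penalty of at most $k$ in the randomized prediction model must have cumulative abstention penalty at least $a$.
   Context: Randomized prediction model: at round $t$ the adversary presents $x_t\in\mathcal{X}$; the learner outputs $(p_{t,-},p_{t,+},1-p_{t,-}-p_{t,+})$ with $p_{t,-},p_{t,+}\ge0$, $p_{t,-}+p_{t,+}\le 1$ (probabilities of predicting $-1$, $+1$, abstaining); the adversary reveals $y_t\in\{-1,+1\}$. After $n$ rounds the cumulative mistake penalty is $\sum_{t=1}^n \big(I(y_t=-1)p_{t,+}+I(y_t=+1)p_{t,-}\big)$ and the cumulative abstention penalty is $\sum_{t=1}^n(1-p_{t,+}-p_{t,-})$. Hypotheses are maps $\mathcal{X}\to\{-1,+1\}$. $\mathcal{C}^l$ is the class of functions $x\mapsto 1-2I(x\in D)$ for $D\subseteq\mathcal{X}$, $|D|\le l$, and $\mathcal{H}^l=\{x\mapsto h(x)c(x): h\in\mathcal{H},c\in\mathcal{C}^l\}$. A sequence $(x_1,y_1),\dots,(x_n,y_n)$ satisfies the $l$-bias assumption w.r.t. $\mathcal{H}$ if some $h\in\mathcal{H}^l$ has $h(x_t)=y_t$ for all $t$. An algorithm guarantees cumulative mistake penalty at most $k$ if this holds on every admissible sequence. *)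

(* Defs.v *)
From Stdlib Require Import Reals List.
Import ListNotations.
Open Scope R_scope.

Inductive label : Type := Neg | Pos.

Definition flip (y : label) : label := match y with Neg => Pos | Pos => Neg end.

Definition isNeg (y : label) : R := match y with Neg => 1 | Pos => 0 end.
Definition isPos (y : label) : R := match y with Neg => 0 | Pos => 1 end.

(* g belongs to H^l : g = h * c with h in H and c in C^l, where
   c(x) = 1 - 2 I(x in D), D a finite subset of X with |D| <= l. *)
Definition in_Hl {X : Type} (H : (X -> label) -> Prop) (l : nat) (g : X -> label) : Prop :=
  exists h : X -> label, H h /\
  exists D : list X, NoDup D /\ (length D <= l)%nat /\
    forall x, (In x D -> g x = flip (h x)) /\ (~ In x D -> g x = h x).

Definition l_bias {X : Type} (H : (X -> label) -> Prop) (l : nat)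
  (s : list (X * label)) : Prop :=
  exists g, in_Hl H l g /\ forall xy, In xy s -> g (fst xy) = snd xy.

(* A learner (deterministic in its output of probabilities): given the past
   labelled examples and the current instance, outputs (p_-, p_+). *)
Definition learner (X : Type) := list (X * label) -> X -> R * R.

Definition valid_learner {X : Type} (L : learner X) : Prop :=
  forall hist x, 0 <= fst (L hist x) /\ 0 <= snd (L hist x) /\
                 fst (L hist x) + snd (L hist x) <= 1.

Definition mistake (p : R * R) (y : label) : R :=
  isNeg y * snd p + isPos y * fst p.

Definition abstain (p : R * R) : R := 1 - snd p - fst p.

Fixpoint mistakes_aux {X : Type} (L : learner X) (hist s : list (X * label)) : R :=
  match s with
  | [] => 0
  | (x, y) :: s' => mistake (L hist x) y + mistakes_aux L (hist ++ [(x, y)]) s'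
  end.

Definition mistakes {X : Type} (L : learner X) (s : list (X * label)) : R :=
  mistakes_aux L [] s.

Definition guarantees_mistakes {X : Type} (H : (X -> label) -> Prop) (l k : nat)
  (L : learner X) : Prop :=
  forall s, l_bias H l s -> mistakes L s <= INR k.

Definition transcript (X : Type) := list (X * (R * R) * label).

Record adversary (X : Type) := {
  adv_rounds : nat;
  adv_x : transcript X -> X;
  adv_y : transcript X -> X -> R * R -> label
}.
Arguments adv_rounds {X}.
Arguments adv_x {X}.
Arguments adv_y {X}.

Definition strip {X : Type} (tr : transcript X) : list (X * label) :=
  map (fun e => (fst (fst e), snd e)) tr.

Fixpoint play_aux {X : Type} (L : learner X) (A : adversary X) (m : nat)
  (tr : transcript X) : transcript X :=
  match m with
  | O => tr
  | S m' =>
      let x := adv_x A tr in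
      let p := L (strip tr) x in
      let y := adv_y A tr x p in
      play_aux L A m' (tr ++ [(x, p, y)])
  end.

Definition play {X : Type} (L : learner X) (A : adversary X) : transcript X :=
  play_aux L A (adv_rounds A) [].

Definition abstentions {X : Type} (tr : transcript X) : R :=
  fold_right (fun e acc => abstain (snd (fst e)) + acc) 0 tr.

(* Main.v *)
Require Import Defs.
From Stdlib Require Import Reals List Lra Lia Arith ZArith.
Import ListNotations.
Open Scope R_scope.

Definition cc (k l : nat) : R := (INR k + /2) / INR l.

Fixpoint negc (tr : transcript nat) : nat :=
  match tr with
  | [] => 0%nat
  | e :: t => ((match snd e with Neg => 1 | Pos => 0 end) + negc t)%nat
  end.

Definition advy (k l : nat) (tr : transcript nat) (x : nat) (p : R * R) : label :=
  if Rle_dec (cc k l) (snd p) then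
    if lt_dec (negc tr) l then Neg else Pos
  else Pos.

Definition advA (k l n : nat) : adversary nat :=
  {| adv_rounds := n; adv_x := fun tr => length tr; adv_y := advy k l |}.

Fixpoint good (L : learner nat) (k l : nat) (pre r : transcript nat) : Prop :=
  match r with
  | [] => True
  | e :: r' =>
      match e with ((x, p), y) =>
        x = length pre /\ p = L (strip pre) x /\ y = advy k l pre x p /\
        good L k l (pre ++ [e]) r'
      end
  end.

Lemma play_good L k l n : forall m tr, exists r,
  play_aux L (advA k l n) m tr = tr ++ r /\ length r = m /\ good L k l tr r.
Proof.
  induction m as [|m IH]; intros tr.
  - exists []. simpl. rewrite app_nil_r. auto.
  - simpl. destruct (IH (tr ++ [(length tr, L (strip tr) (length tr),
        advy k l tr (length tr) (L (strip tr) (length tr)))])) as [r [H1 [H2 H3]]].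
    eexists. rewrite H1, <- app_assoc. simpl. split; [reflexivity|]. split.
    + simpl. lia.
    + simpl. repeat split; auto.
Qed.

Fixpoint sumM (r : transcript nat) : R :=
  match r with [] => 0 | e :: t => mistake (snd (fst e)) (snd e) + sumM t end.

Lemma strip_app (a b : transcript nat) : strip (a ++ b) = strip a ++ strip b.
Proof. unfold strip. apply map_app. Qed.

Lemma mist_eq L k l : forall r pre, good L k l pre r ->
  mistakes_aux L (strip pre) (strip r) = sumM r.
Proof.
  induction r as [|[[x p] y] r IH]; intros pre G; simpl; auto.
  destruct G as [Hx [Hp [Hy G]]].
  rewrite <- (IH _ G). rewrite strip_app. simpl. subst p. reflexivity.
Qed.

Lemma negc_app a b : negc (a ++ b) = (negc a + negc b)%nat.
Proof. induction a; simpl; lia. Qed.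

Lemma negc_bound L k l : forall r pre, good L k l pre r -> (negc pre <= l)%nat ->
  (negc pre + negc r <= l)%nat.
Proof.
  induction r as [|[[x p] y] r IH]; intros pre G Hb; simpl; [lia|].
  destruct G as [Hx [Hp [Hy G]]].
  assert (Hb' : (negc (pre ++ [(x,p,y)]) <= l)%nat).
  { rewrite negc_app. simpl. subst y. unfold advy.
    destruct (Rle_dec _ _); [destruct (lt_dec _ _)|]; simpl; lia. }
  specialize (IH _ G Hb'). rewrite negc_app in IH. simpl in IH. lia.
Qed.

Lemma sumM_lower L k l : valid_learner L -> forall r pre, good L k l pre r ->
  cc k l * INR (negc r) <= sumM r.
Proof.
  intros V. induction r as [|[[x p] y] r IH]; intros pre G; simpl.
  - lra.
  - destruct G as [Hx [Hp [Hy G]]]. specialize (IH _ G).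
    destruct (V (strip pre) x) as [V1 [V2 V3]]. rewrite <- Hp in V1, V2, V3.
    unfold mistake. subst y. unfold advy in *.
    destruct (Rle_dec _ _) as [Hc|Hc]; [destruct (lt_dec _ _)|];
      cbn [negc snd fst isNeg isPos Nat.add]; rewrite ?S_INR; nra.
Qed.

Fixpoint abst (r : transcript nat) : R :=
  match r with [] => 0 | e :: t => abstain (snd (fst e)) + abst t end.

Lemma abst_eq r : abstentions r = abst r.
Proof. induction r; simpl; rewrite ?IHr; auto. Qed.

Lemma cc_nonneg k l : 0 <= cc k l.
Proof.
  unfold cc. destruct l. simpl. unfold Rdiv. rewrite Rinv_0. lra.
  apply Rmult_le_pos. pose proof (pos_INR k). lra.
  apply Rlt_le, Rinv_0_lt_compat. apply lt_0_INR. lia.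
Qed.

Lemma abst_lower L k l : valid_learner L -> forall r pre, good L k l pre r ->
  (negc pre + negc r < l)%nat ->
  (1 - cc k l) * INR (length r) - INR (negc r) <= abst r + sumM r.
Proof.
  intros V. pose proof (cc_nonneg k l) as C0.
  induction r as [|[[x p] y] r IH]; intros pre G Hn; cbn [abst sumM].
  - simpl. lra.
  - destruct G as [Hx [Hp [Hy G]]].
    assert (Hn' : (negc (pre ++ [(x,p,y)]) + negc r < l)%nat).
    { rewrite negc_app. simpl in *. lia. }
    specialize (IH _ G Hn').
    destruct (V (strip pre) x) as [V1 [V2 V3]]. rewrite <- Hp in V1, V2, V3.
    unfold mistake, abstain.
    assert (Hpre : (negc pre < l)%nat) by (simpl in Hn; lia).
    subst y. unfold advy in *.
    destruct (Rle_dec _ _) as [Hc|Hc]; [destruct (lt_dec _ _); [|lia]|];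
      cbn [negc length snd fst isNeg isPos Nat.add] in *; rewrite ?S_INR in *; nra.
Qed.

Fixpoint negD (r : transcript nat) : list nat :=
  match r with
  | [] => []
  | e :: t => match snd e with Neg => fst (fst e) :: negD t | Pos => negD t end
  end.

Lemma good_ge L k l : forall r pre, good L k l pre r -> forall e, In e r ->
  (length pre <= fst (fst e))%nat.
Proof.
  induction r as [|[[x p] y] r IH]; intros pre G e Hi; [destruct Hi|].
  destruct G as [Hx [_ [_ G]]]. destruct Hi as [<-|Hi]. simpl; lia.
  specialize (IH _ G e Hi). rewrite length_app in IH. simpl in IH. lia.
Qed.

Lemma negD_props L k l : forall r pre, good L k l pre r ->
  NoDup (negD r) /\ length (negD r) = negc r /\
  (forall z, In z (negD r) -> (length pre <= z)%nat) /\
  (forall xy, In xy (strip r) ->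
     (snd xy = Neg -> In (fst xy) (negD r)) /\
     (snd xy = Pos -> ~ In (fst xy) (negD r))).
Proof.
  induction r as [|[[x p] y] r IH]; intros pre G; simpl.
  - split; [constructor|]. split; [reflexivity|]. split; [intros z []|]. intros xy [].
  - destruct G as [Hx [Hp [Hy G]]].
    pose proof (good_ge _ _ _ _ _ G) as Hall.
    destruct (IH _ G) as [N1 [N2 [N3 N4]]].
    rewrite length_app in N3, Hall. simpl in N3, Hall.
    assert (Hnot : ~ In x (negD r)) by (intro Hi; apply N3 in Hi; lia).
    destruct y; simpl.
    + split; [constructor; auto|]. split; [lia|]. split.
      { intros z [<-|Hz]; [lia| apply N3 in Hz; lia]. }
      intros xy [<-|Hi]; simpl.
      * split; auto. discriminate.
      * destruct (N4 _ Hi) as [N5 N6]. split; [intros; right; auto|].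
        intros HP [E|Hz]; [|exact (N6 HP Hz)].
        apply in_map_iff in Hi. destruct Hi as [e [E' Hi']].
        specialize (Hall _ Hi'). subst xy. simpl in E. lia.
    + split; auto. split; auto. split.
      { intros z Hz. apply N3 in Hz. lia. }
      intros xy [<-|Hi]; simpl.
      * split; [discriminate|auto].
      * apply (N4 _ Hi).
Qed.

Theorem mainTheorem3 :
  exists (X : Type) (H : (X -> label) -> Prop),
    (exists h0 : X -> label, forall h, H h <-> h = h0) /\
    forall k l : nat, (k < l)%nat ->
    forall a : R, 0 <= a ->
    exists A : adversary X,
      (forall L : learner X, valid_learner L -> l_bias H l (strip (play L A))) /\
      (forall L : learner X, valid_learner L -> guarantees_mistakes H l k L ->
         a <= abstentions (play L A)).
Proof.
  exists nat, (fun h => h = (fun _ => Pos)). split.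
  { exists (fun _ => Pos). tauto. }
  intros k l Hkl a Ha.
  set (N := (Z.to_nat (up a) + l + k)%nat).
  exists (advA k l (2 * l * N)).
  assert (Hlb : forall L, (exists r, play L (advA k l (2 * l * N)) = r /\
      length r = (2 * l * N)%nat /\ good L k l [] r /\ l_bias (fun h => h = (fun _ => Pos)) l (strip r))).
  { intros L. destruct (play_good L k l (2*l*N) (2*l*N) []) as [r [E1 [E2 E3]]].
    exists r. unfold play. cbn [app] in E1. cbn [adv_rounds advA]. rewrite E1. split; [reflexivity|]. split; auto.
    split; auto.
    destruct (negD_props _ _ _ _ _ E3) as [N1 [N2 [_ N4]]].
    pose proof (negc_bound _ _ _ _ _ E3 (Nat.le_0_l _)) as NB. simpl in NB.
    exists (fun x => if in_dec Nat.eq_dec x (negD r) then Neg else Pos). split.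
    - exists (fun _ => Pos). split; [reflexivity|]. exists (negD r).
      split; [auto|]. split; [lia|]. intros x.
      destruct (in_dec Nat.eq_dec x (negD r)); split; intros; simpl; tauto.
    - intros xy Hi. destruct (N4 _ Hi) as [N5 N6].
      destruct (snd xy) eqn:Ey.
      + destruct (in_dec _ _ _); auto. exfalso; auto.
      + destruct (in_dec _ _ _); auto. exfalso; apply (N6 eq_refl); auto. }
  split.
  - intros L _. destruct (Hlb L) as [r [E1 [_ [_ HB]]]]. rewrite E1. exact HB.
  - intros L V G. destruct (Hlb L) as [r [E1 [E2 [E3 HB]]]]. rewrite E1.
    specialize (G _ HB). unfold mistakes in G.
    pose proof (mist_eq L k l r [] E3) as ME. simpl in ME. rewrite ME in G.
    pose proof (negc_bound _ _ _ _ _ E3 (Nat.le_0_l _)) as NB. simpl in NB.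
    pose proof (sumM_lower _ _ _ V _ _ E3) as SL.
    assert (Hl0 : 0 < INR l) by (apply lt_0_INR; lia).
    assert (Hkl' : INR k + 1 <= INR l) by (rewrite <- S_INR; apply le_INR; lia).
    assert (Ccl : cc k l * INR l = INR k + /2) by (unfold cc; field; lra).
    assert (Hlt : (negc r < l)%nat).
    { destruct (Nat.eq_dec (negc r) l) as [E|E]; [|lia].
      rewrite E in SL. lra. }
    pose proof (abst_lower _ _ _ V _ _ E3 ltac:(simpl; lia)) as AL.
    rewrite abst_eq. rewrite E2 in AL.
    assert (Hn : INR (negc r) <= INR l) by (apply le_INR; lia).
    assert (HN : a + INR l + INR k <= INR N).
    { unfold N. rewrite !plus_INR. rewrite INR_IZR_INZ.
      destruct (archimed a) as [A1 _].
      match goal with |- context [INR (Z.to_nat ?z)] => rewrite (INR_IZR_INZ (Z.to_nat z)), (Z2Nat.id z) end. lra. apply le_IZR. lra. }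
    rewrite !mult_INR in AL. simpl (INR 2) in AL.
    assert (Hk : 0 <= INR k) by apply pos_INR.
    assert (E : (1 - cc k l) * ((1 + 1) * INR l * INR N)
                = (INR l - INR k - /2) * 2 * INR N).
    { unfold cc. field. lra. }
    rewrite E in AL.
    assert (HN0 : 0 <= INR N) by apply pos_INR.
    nra.
Qed.
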